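(* Let $\sigma$ be any two-qubit density matrix of rank at most $2$. Then there exist single-qubit unitaries $U_A,U_B$ and parameters $\theta,\phi,\alpha\in[0,\pi/2]$, $\beta\in[0,2\pi]$, $\nu_1,\nu_2\in[0,1]$ with $\nu_1+\nu_2=1$ such that $(U_A\otimes U_B)\,\sigma\,(U_A\otimes U_B)^\dagger=\nu_1|\psi_1\rangle\langle\psi_1|+\nu_2|\psi_2\rangle\langle\psi_2|$, where $|\psi_1\rangle=\cos\theta|00\rangle+\sin\theta|11\rangle$ and $|\psi_2\rangle=\cos\phi(\cos\alpha|01\rangle+\sin\alpha|10\rangle)+e^{i\beta}\sin\phi(\sin\theta|00\rangle-\cos\theta|11\rangle)$.
   Context: Qubits are labelled so that the first tensor factor belongs to Alice and the second to Bob; $\{|0\rangle,|1\rangle\}$ is the computational basis and $|ij\rangle=|i\rangle\otimes|j\rangle$. *)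

(* Defs.v *)
From mathcomp Require Import all_boot all_order all_algebra.
From mathcomp Require Export complex.
From mathcomp Require Export reals trigo.
Import GRing.Theory Num.Theory.
Set Implicit Arguments. Unset Strict Implicit. Unset Printing Implicit Defensive.
Local Open Scope ring_scope.
Local Open Scope complex_scope.

Section QubitDefs.
Variable R : realType.
Notation C := R[i].

Definition adjmx (m n : nat) (A : 'M[C]_(m, n)) : 'M[C]_(n, m) :=
  \matrix_(i < n, j < m) (A j i)^*.

Definition unitary2 (U : 'M[C]_2) : Prop := U *m adjmx U = 1%:M.

Definition density4 (rho : 'M[C]_4) : Prop :=
  [/\ adjmx rho = rho,
      (forall v : 'cV[C]_4, 0 <= (adjmx v *m rho *m v) 0 0)
    & \tr rho = 1].

(* index of |ab> is 2a+b : Alice (first factor) is the high bit *)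
Definition hi (k : 'I_4) : 'I_2 := inord (k %/ 2).
Definition lo (k : 'I_4) : 'I_2 := inord (k %% 2).

Definition kron2 (A B : 'M[C]_2) : 'M[C]_4 :=
  \matrix_(i < 4, j < 4) (A (hi i) (hi j) * B (lo i) (lo j)).

Definition ket (a b : nat) : 'cV[C]_4 :=
  \col_(k < 4) (((k : nat) == 2 * a + b)%N)%:R.

Definition proj (psi : 'cV[C]_4) : 'M[C]_4 := psi *m adjmx psi.

End QubitDefs.

(* Main.v *)
Require Import Defs.
From mathcomp Require Import all_boot all_order all_algebra.
From mathcomp Require Import complex reals trigo.
From mathcomp Require Import spectral sesquilinear.
From mathcomp Require Import ring lra.
Import Order.TTheory GRing.Theory Num.Theory.
Set Implicit Arguments. Unset Strict Implicit. Unset Printing Implicit Defensive.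
Local Open Scope ring_scope.
Local Open Scope complex_scope.

Section Infra.
Variable R : realType.
Local Notation C := R[i].

Lemma conjcM (a b : C) : conjc (a * b) = conjc a * conjc b. Proof. exact: rmorphM. Qed.
Lemma conjcD (a b : C) : conjc (a + b) = conjc a + conjc b. Proof. exact: rmorphD. Qed.
Lemma conjcN (a : C) : conjc (- a) = - conjc a. Proof. exact: rmorphN. Qed.
Lemma conjcB (a b : C) : conjc (a - b) = conjc a - conjc b. Proof. exact: rmorphB. Qed.
Lemma conjcV (a : C) : conjc (a^-1) = (conjc a)^-1. Proof. exact: conjc_inv. Qed.
Lemma conjcX (a : C) n : conjc (a ^+ n) = conjc a ^+ n. Proof. exact: rmorphXn. Qed.
Lemma conjcR (x : R) : conjc (x%:C) = x%:C. Proof. exact: conjc_real. Qed.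
Lemma conjcKK (a : C) : conjc (conjc a) = a. Proof. exact: conjcK. Qed.
Lemma conjc0' : conjc (0 : C) = 0. Proof. exact: conjc0. Qed.
Lemma conjc1' : conjc (1 : C) = 1. Proof. exact: conjc1. Qed.
Lemma conjcn (n : nat) : conjc (n%:R : C) = n%:R. Proof. exact: conjc_nat. Qed.
Definition conjcE := (conjcM, conjcD, conjcB, conjcN, conjcV, conjcX, conjcKK, conjcR, conjc0', conjc1', conjcn).

Lemma sum2 (F : 'I_2 -> C) : \sum_(i<2) F i = F (inord 0) + F (inord 1).
Proof.
rewrite big_ord_recl big_ord1; congr (F _ + F _); apply/val_inj; by rewrite /= inordK.
Qed.

Lemma sum4 (F : 'I_4 -> C) : \sum_(i<4) F i =
  F (inord 0) + F (inord 1) + F (inord 2) + F (inord 3).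
Proof.
rewrite !big_ord_recl big_ord0 addr0 !addrA.
congr (F _ + F _ + F _ + F _); apply/val_inj; by rewrite /= ?inordK.
Qed.

Lemma ord2P (i : 'I_2) : i = inord 0 \/ i = inord 1.
Proof.
case: i => [[|[|k]] Hk].
- by left; apply/val_inj; rewrite /= inordK.
- by right; apply/val_inj; rewrite /= inordK.
- by [].
Qed.

Lemma ord4P (i : 'I_4) : [\/ i = inord 0, i = inord 1, i = inord 2 | i = inord 3].
Proof.
case: i => [[|[|[|[|k]]]] Hk].
- by apply: Or41; apply/val_inj; rewrite /= inordK.
- by apply: Or42; apply/val_inj; rewrite /= inordK.
- by apply: Or43; apply/val_inj; rewrite /= inordK.
- by apply: Or44; apply/val_inj; rewrite /= inordK.
- by [].
Qed.

Lemma hi0 : hi (inord 0 : 'I_4) = inord 0. Proof. by apply/val_inj; rewrite /hi /= !inordK. Qed.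
Lemma hi1 : hi (inord 1 : 'I_4) = inord 0. Proof. by apply/val_inj; rewrite /hi /= !inordK. Qed.
Lemma hi2 : hi (inord 2 : 'I_4) = inord 1. Proof. by apply/val_inj; rewrite /hi /= !inordK. Qed.
Lemma hi3 : hi (inord 3 : 'I_4) = inord 1. Proof. by apply/val_inj; rewrite /hi /= !inordK. Qed.
Lemma lo0 : lo (inord 0 : 'I_4) = inord 0. Proof. by apply/val_inj; rewrite /lo /= !inordK. Qed.
Lemma lo1 : lo (inord 1 : 'I_4) = inord 1. Proof. by apply/val_inj; rewrite /lo /= !inordK. Qed.
Lemma lo2 : lo (inord 2 : 'I_4) = inord 0. Proof. by apply/val_inj; rewrite /lo /= !inordK. Qed.
Lemma lo3 : lo (inord 3 : 'I_4) = inord 1. Proof. by apply/val_inj; rewrite /lo /= !inordK. Qed.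

Definition hilo := (hi0, hi1, hi2, hi3, lo0, lo1, lo2, lo3).

Lemma adjmxE m n (A : 'M[C]_(m, n)) i j : adjmx A i j = conjc (A j i).
Proof. by rewrite mxE. Qed.

Lemma adjmxK m n (A : 'M[C]_(m, n)) : adjmx (adjmx A) = A.
Proof. by apply/matrixP => i j; rewrite !mxE conjcK. Qed.

Lemma adjmx_mul m n p (A : 'M[C]_(m, n)) (B : 'M[C]_(n, p)) :
  adjmx (A *m B) = adjmx B *m adjmx A.
Proof.
apply/matrixP => i j; rewrite !mxE rmorph_sum; apply: eq_bigr => k _.
by rewrite !mxE rmorphM mulrC.
Qed.

Lemma adjmxD m n (A B : 'M[C]_(m, n)) : adjmx (A + B) = adjmx A + adjmx B.
Proof. by apply/matrixP => i j; rewrite !mxE rmorphD. Qed.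

Lemma adjmxZ m n (c : C) (A : 'M[C]_(m, n)) : adjmx (c *: A) = conjc c *: adjmx A.
Proof. by apply/matrixP => i j; rewrite !mxE rmorphM. Qed.

Lemma adjmx1 n : adjmx (1%:M : 'M[C]_n) = 1%:M.
Proof.
by apply/matrixP => i j; rewrite !mxE eq_sym conjc_nat.
Qed.

Lemma kron2_mul (A B A' B' : 'M[C]_2) :
  kron2 A B *m kron2 A' B' = kron2 (A *m A') (B *m B').
Proof.
apply/matrixP => i j; rewrite !mxE sum4 !mxE !sum2 !hilo. ring.
Qed.

Lemma adj_kron2 (A B : 'M[C]_2) : adjmx (kron2 A B) = kron2 (adjmx A) (adjmx B).
Proof. by apply/matrixP => i j; rewrite !mxE rmorphM. Qed.

Lemma inord_eq2 (a b : nat) : (a < 2)%N -> (b < 2)%N ->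
  ((inord a : 'I_2) == inord b) = (a == b).
Proof. by move=> ha hb; rewrite -(inj_eq val_inj) /= !inordK. Qed.
Lemma inord_eq4 (a b : nat) : (a < 4)%N -> (b < 4)%N ->
  ((inord a : 'I_4) == inord b) = (a == b).
Proof. by move=> ha hb; rewrite -(inj_eq val_inj) /= !inordK. Qed.

Lemma kron2_1 : kron2 (1%:M : 'M[C]_2) 1%:M = 1%:M.
Proof.
apply/matrixP => i j; rewrite !mxE.
by case: (ord4P i) => ->; case: (ord4P j) => ->; rewrite !hilo !inord_eq2 // !inord_eq4 //=
  ?mulr0 ?mul0r ?mulr1.
Qed.

Lemma unitary2_mul (A B : 'M[C]_2) : unitary2 A -> unitary2 B -> unitary2 (A *m B).
Proof.
rewrite /unitary2 => hA hB; rewrite adjmx_mul mulmxA -[A *m B *m _]mulmxA hB.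
by rewrite mulmx1 hA.
Qed.

Lemma unitary_kron2 (A B : 'M[C]_2) : unitary2 A -> unitary2 B ->
  kron2 A B *m adjmx (kron2 A B) = 1%:M.
Proof.
by rewrite /unitary2 => hA hB; rewrite adj_kron2 kron2_mul hA hB kron2_1.
Qed.

Lemma proj_conj (U : 'M[C]_4) w : U *m proj w *m adjmx U = proj (U *m w).
Proof. by rewrite /proj adjmx_mul !mulmxA. Qed.

Lemma projZ (c : C) w : proj (c *: w) = (c * conjc c) *: proj w.
Proof. by rewrite /proj adjmxZ -scalemxAl -scalemxAr scalerA. Qed.

End Infra.

Section Spec.
Variable R : realType.
Local Notation C := R[i].

Lemma sum_delta m n (l : 'I_4) (F : 'I_4 -> 'M[C]_(m, n)) :
  \sum_(k < 4) (((k == l)%:R : C) *: F k) = F l.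
Proof.
rewrite (bigD1 l) //= eqxx scale1r big1 ?addr0 // => k /negbTE ->.
by rewrite scale0r.
Qed.

Lemma pick2 (p : 'I_4 -> bool) :
  (forall a b c : 'I_4, a != b -> a != c -> b != c -> p a -> p b -> p c -> False) ->
  exists a b : 'I_4, a != b /\ forall k, p k -> k = a \/ k = b.
Proof.
move=> H.
case E0: (p (inord 0)); case E1: (p (inord 1)); case E2: (p (inord 2)); case E3: (p (inord 3));
  first [ solve [exfalso; apply: (H (inord 0) (inord 1) (inord 2)); by rewrite ?inord_eq4 ?E0 ?E1 ?E2 ?E3]
        | solve [exfalso; apply: (H (inord 0) (inord 1) (inord 3)); by rewrite ?inord_eq4 ?E0 ?E1 ?E2 ?E3]
        | solve [exfalso; apply: (H (inord 0) (inord 2) (inord 3)); by rewrite ?inord_eq4 ?E0 ?E1 ?E2 ?E3]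
        | solve [exfalso; apply: (H (inord 1) (inord 2) (inord 3)); by rewrite ?inord_eq4 ?E0 ?E1 ?E2 ?E3]
        | idtac ];
  first [ solve [exists (inord 0), (inord 1); split; [by rewrite inord_eq4 |
             move=> k; case: (ord4P k) => -> hk; by [left | right | rewrite ?E0 ?E1 ?E2 ?E3 in hk]]]
        | solve [exists (inord 0), (inord 2); split; [by rewrite inord_eq4 |
             move=> k; case: (ord4P k) => -> hk; by [left | right | rewrite ?E0 ?E1 ?E2 ?E3 in hk]]]
        | solve [exists (inord 0), (inord 3); split; [by rewrite inord_eq4 |
             move=> k; case: (ord4P k) => -> hk; by [left | right | rewrite ?E0 ?E1 ?E2 ?E3 in hk]]]
        | solve [exists (inord 1), (inord 2); split; [by rewrite inord_eq4 |
             move=> k; case: (ord4P k) => -> hk; by [left | right | rewrite ?E0 ?E1 ?E2 ?E3 in hk]]]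
        | solve [exists (inord 1), (inord 3); split; [by rewrite inord_eq4 |
             move=> k; case: (ord4P k) => -> hk; by [left | right | rewrite ?E0 ?E1 ?E2 ?E3 in hk]]]
        | solve [exists (inord 2), (inord 3); split; [by rewrite inord_eq4 |
             move=> k; case: (ord4P k) => -> hk; by [left | right | rewrite ?E0 ?E1 ?E2 ?E3 in hk]]] ].
Qed.

End Spec.

Section Spec2.
Variable R : realType.
Local Notation C := R[i].
Local Open Scope sesquilinear_scope.

Lemma spec_decomp (sigma : 'M[C]_4) : density4 sigma -> (\rank sigma <= 2)%N ->
 exists (w1 w2 : 'cV[C]_4) (n1 n2 : R),
  [/\ adjmx w1 *m w1 = 1%:M, adjmx w2 *m w2 = 1%:M, adjmx w1 *m w2 = 0,
      [/\ 0 <= n1, 0 <= n2 & n1 + n2 = 1] &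
      sigma = n1%:C *: proj w1 + n2%:C *: proj w2].
Proof.
case=> herm psd tr1 rk.
have adjE : sigma ^t* = sigma.
  by rewrite -{2}herm; apply/matrixP => i j; rewrite !mxE.
have nrm : sigma \is normalmx by rewrite qualifE adjE.
have sigE := orthomx_spectralP nrm.
set P := spectralmx sigma in sigE; set d := spectral_diag sigma in sigE.
have Pu : P \is unitarymx by apply: spectral_unitarymx.
have PPt : P *m P ^t* = 1%:M by apply/unitarymxP.
rewrite invmx_unitary // in sigE.
pose w (k : 'I_4) : 'cV[C]_4 := adjmx (row k P).
have ortho k l : adjmx (w k) *m w l = ((k == l)%:R)%:M.
  apply/matrixP => i j; rewrite /w adjmxK.
  have /matrixP/(_ k l) := PPt; rewrite !mxE => <-.
  rewrite !ord1 eqxx mulr1n; apply: eq_bigr => u _; by rewrite !mxE.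
have decomp : sigma = \sum_(k < 4) d 0 k *: proj (w k).
  rewrite {1}sigE; apply/matrixP => i j.
  rewrite mul_mx_diag !mxE summxE; apply: eq_bigr => k _.
  rewrite !mxE big_ord1 !mxE conjcK; ring.
have eig l : sigma *m w l = d 0 l *: w l.
  rewrite {1}decomp.  rewrite mulmx_suml.
  rewrite -(sum_delta l (fun k => d 0 k *: w k)).
  apply: eq_bigr => k _; rewrite -scalemxAl /proj -mulmxA ortho mul_mx_scalar.
  by rewrite scalerA mulrC -scalerA.
have dval l : (adjmx (w l) *m sigma *m w l) 0 0 = d 0 l.
  by rewrite -mulmxA eig -scalemxAr ortho eqxx !mxE eqxx mulr1.

have three a b c : a != b -> a != c -> b != c -> d 0 a != 0 -> d 0 b != 0 -> d 0 c != 0 -> False.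
  move=> hab hac hbc ha hb hc.
  pose f (i : 'I_3) : 'I_4 := nth a [:: a; b; c] i.
  have fnz i : d 0 (f i) != 0.
    by case: i => [[|[|[|?]]] ?] //.
  have feq i i' : (f i == f i') = (i == i').
    case: i => [[|[|[|?]]] hi] //; case: i' => [[|[|[|?]]] hi'] //=;
    by rewrite /f /= ?eqxx // ?[b == a]eq_sym ?[c == a]eq_sym ?[c == b]eq_sym ?(negbTE hab) ?(negbTE hac) ?(negbTE hbc).
  pose B := \matrix_(i < 3, j < 4) ((d 0 (f i))^-1 * adjmx (w (f i)) 0 j).
  pose Cm := \matrix_(j < 4, i < 3) w (f i) j 0.
  have BC : B *m (sigma *m Cm) = 1%:M.
    apply/matrixP => i i'.
    have SC : sigma *m Cm = \matrix_(j, i) (d 0 (f i) * w (f i) j 0).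
      apply/matrixP => j k; rewrite !mxE.
      have /matrixP/(_ j 0) := eig (f k); rewrite !mxE => <-.
      by apply: eq_bigr => u _; rewrite !mxE.
    rewrite SC !mxE.
    have /matrixP/(_ 0 0) := ortho (f i) (f i'); rewrite !mxE eqxx mulr1n.
    rewrite feq => E.
    transitivity ((d 0 (f i))^-1 * d 0 (f i') * (i == i')%:R).
      rewrite -E mulr_sumr; apply: eq_bigr => u _; rewrite !mxE; ring.
    have [->|_] := eqVneq i i'; last by rewrite mulr0.
    by rewrite mulVf ?fnz // mul1r.
  have : (3 <= \rank sigma)%N.
    rewrite -{1}(mxrank1 C 3) -BC.
    apply: leq_trans (mxrankM_maxr _ _) _; exact: mxrankM_maxl.
  by rewrite leqNgt ltnS (leq_trans rk).
have [a [b [hab hk]]] := @pick2 (fun k => d 0 k != 0) three.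
have dz k : k != a -> k != b -> d 0 k = 0.
  move=> ka kb; apply/eqP; apply: contraNT ka => /hk [->//|kb']; by rewrite kb' eqxx in kb.
have sig2 : sigma = d 0 a *: proj (w a) + d 0 b *: proj (w b).
  rewrite {1}decomp (bigD1 a) //= (bigD1 b) /=; last by rewrite eq_sym.
  rewrite big1 ?addr0 // => k /andP [kb ka]; by rewrite dz // scale0r.
have dpos l : 0 <= d 0 l by rewrite -dval psd.
have dreal l : d 0 l = (complex.Re (d 0 l))%:C.
  have := dpos l; case: (d 0 l) => x y; rewrite lecE /= => /andP [/eqP -> _].
  by [].
have dRe l : 0 <= complex.Re (d 0 l).
  by have := dpos l; rewrite {1}dreal lecR.
have trd : \sum_(k < 4) d 0 k = 1.
  by rewrite -tr1 sigE mxtrace_mulC mulmxA PPt mul1mx mxtrace_diag.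
have trab : d 0 a + d 0 b = 1.
  rewrite -trd (bigD1 a) //= (bigD1 b) /=; last by rewrite eq_sym.
  rewrite big1 ?addr0 // => k /andP [kb ka]; by rewrite dz.
exists (w a), (w b), (complex.Re (d 0 a)), (complex.Re (d 0 b)); split.
- by rewrite ortho eqxx.
- by rewrite ortho eqxx.
- by rewrite ortho (negbTE hab); apply/matrixP => i j; rewrite !mxE mul0rn.
- split; [exact: dRe | exact: dRe |].
  apply: (@complexI R); rewrite rmorphD /= -!dreal; exact: trab.
- by rewrite -!dreal.
Qed.

End Spec2.

Section Norms.
Variable R : realType.
Local Notation C := R[i].

Definition nr (z : C) : R := Num.sqrt (complex.Re z ^+ 2 + complex.Im z ^+ 2).
Lemma nr_ge0 z : 0 <= nr z. Proof. exact: sqrtr_ge0. Qed.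
Lemma nrE2 (z : C) : z * conjc z = (nr z)%:C ^+ 2.
Proof.
rewrite -rmorphXn /nr sqr_sqrtr; last by apply: addr_ge0; apply: sqr_ge0.
case: z => a b /=. simpc. congr (_ +i* _); ring.
Qed.
Lemma nr_eq0 (z : C) : nr z = 0 -> z = 0.
Proof.
move=> h; have := nrE2 z; rewrite h expr0n /= => /eqP.
by rewrite mulf_eq0 conjc_eq0 orbb => /eqP.
Qed.
Lemma RC_neq0 (x : R) : x != 0 -> x%:C != 0 :> C.
Proof. by move=> h; apply: contra h => /eqP [->]. Qed.
Lemma RCV (x : R) : (x^-1)%:C = (x%:C)^-1 :> C. Proof. exact: fmorphV. Qed.
Lemma RCM (x y : R) : (x * y)%:C = x%:C * y%:C :> C. Proof. exact: rmorphM. Qed.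
Lemma RCD (x y : R) : (x + y)%:C = x%:C + y%:C :> C. Proof. exact: rmorphD. Qed.
Lemma RCX (x : R) n : (x ^+ n)%:C = x%:C ^+ n :> C. Proof. exact: rmorphXn. Qed.
Lemma RC1 : (1 : R)%:C = 1 :> C. Proof. by []. Qed.

Definition ph (z : C) : C := if nr z == 0 then 1 else z / (nr z)%:C.

Lemma phP (z : C) : ph z * conjc (ph z) = 1.
Proof.
rewrite /ph; case: eqP => [_|/eqP h]; first by rewrite conjc1' mulr1.
have hC := RC_neq0 h.
rewrite !conjcE.
transitivity ((z * conjc z) / (nr z)%:C ^+ 2); first by field.
by rewrite nrE2 divff // expf_neq0.
Qed.

Lemma phN (z : C) : z * conjc (ph z) = (nr z)%:C.
Proof.
rewrite /ph; case: eqP => [h|/eqP h]; first by rewrite h (nr_eq0 h) mul0r.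
have hC := RC_neq0 h.
rewrite !conjcE mulrA nrE2; by field.
Qed.

End Norms.

Section SVD.
Variable R : realType.
Local Notation C := R[i].
Local Notation O0 := (inord 0 : 'I_2).
Local Notation O1 := (inord 1 : 'I_2).

Definition mat2 (a b c d : C) : 'M[C]_2 :=
  \matrix_(i < 2, j < 2) (if (i : nat) == 0%N then (if (j : nat) == 0%N then a else b)
                          else (if (j : nat) == 0%N then c else d)).

Lemma mat2E00 a b c d : mat2 a b c d O0 O0 = a. Proof. by rewrite mxE !inordK. Qed.
Lemma mat2E01 a b c d : mat2 a b c d O0 O1 = b. Proof. by rewrite mxE !inordK. Qed.
Lemma mat2E10 a b c d : mat2 a b c d O1 O0 = c. Proof. by rewrite mxE !inordK. Qed.
Lemma mat2E11 a b c d : mat2 a b c d O1 O1 = d. Proof. by rewrite mxE !inordK. Qed.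
Definition mat2E := (mat2E00, mat2E01, mat2E10, mat2E11).

Lemma unitary_mat2 (a b c d : C) :
  a * conjc a + b * conjc b = 1 -> a * conjc c + b * conjc d = 0 ->
  c * conjc c + d * conjc d = 1 -> unitary2 (mat2 a b c d).
Proof.
move=> h1 h2 h3; apply/matrixP => i j; rewrite !mxE sum2 !mxE.
case: (ord2P i) => ->; case: (ord2P j) => ->; rewrite ?inord_eq2 // ?inordK //=;
  try first [ by rewrite h1 | by rewrite h2 | by rewrite h3
        | by have := congr1 (@conjc _) h2; rewrite !conjcE => E; rewrite [c * _]mulrC [d * _]mulrC E ].
Qed.

Lemma unit_perp (u v : C) (s : R) : s != 0 ->
  s%:C ^+ 2 = u * conjc u + v * conjc v ->
  unitary2 (mat2 (conjc u / s%:C) (conjc v / s%:C) (- v / s%:C) (u / s%:C)).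
Proof.
move=> hs hS; have hC := RC_neq0 hs.
apply: unitary_mat2; rewrite !conjcE.
- transitivity ((u * conjc u + v * conjc v) / s%:C ^+ 2); first by field.
  by rewrite -hS divff // expf_neq0.
- by field.
- transitivity ((u * conjc u + v * conjc v) / s%:C ^+ 2); first by field.
  by rewrite -hS divff // expf_neq0.
Qed.

Lemma sq0 (x y : R) : 0 <= x -> 0 <= y -> x ^+ 2 + y ^+ 2 = 0 -> x = 0 /\ y = 0.
Proof. move=> hx hy h; split; nra. Qed.

End SVD.

Section SVD2.
Variable R : realType.
Local Notation C := R[i].
Local Notation O0 := (inord 0 : 'I_2).
Local Notation O1 := (inord 1 : 'I_2).
Local Open Scope sesquilinear_scope.

Lemma numconjE (x : C) : Num.conj x = conjc x. Proof. by []. Qed.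
Lemma conjc_sum (F : 'I_2 -> C) : conjc (\sum_k F k) = \sum_k conjc (F k).
Proof. exact: rmorph_sum. Qed.

Lemma mulmx2E (A B : 'M[C]_2) i j : (A *m B) i j = A i O0 * B O0 j + A i O1 * B O1 j.
Proof. by rewrite mxE sum2. Qed.

Lemma sqrt_pos (t : R) : 0 <= t -> t != 0 -> Num.sqrt t != 0.
Proof. by move=> h0 h1; rewrite sqrtr_eq0; apply/negP => h; move/negP: h1; apply; rewrite eq_le h h0. Qed.

Lemma nr2E (u v : C) : 
  (Num.sqrt (nr u ^+ 2 + nr v ^+ 2))%:C ^+ 2 = u * conjc u + v * conjc v.
Proof.
rewrite -RCX sqr_sqrtr; last by apply: addr_ge0; apply: sqr_ge0.
by rewrite RCD !RCX !nrE2.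
Qed.

Lemma svd2 (M : 'M[C]_2) : exists A Q : 'M[C]_2,
  [/\ unitary2 A, Q *m adjmx Q = 1%:M,
      (A *m (M *m adjmx Q)) O0 O1 = 0 & (A *m (M *m adjmx Q)) O1 O0 = 0].
Proof.
set H := adjmx M *m M.
have adjH : H ^t* = H.
  apply/matrixP => i j; rewrite /H !mxE numconjE conjc_sum; apply: eq_bigr => k _.
  by rewrite !mxE !conjcE mulrC.
have nrm : H \is normalmx by rewrite qualifE adjH.
have HE := orthomx_spectralP nrm.
set P := spectralmx H in HE; set e := spectral_diag H in HE.
have Pu : P \is unitarymx by apply: spectral_unitarymx.
have PPt : P *m P ^t* = 1%:M by apply/unitarymxP.
rewrite invmx_unitary // in HE.
have adjP : P ^t* = adjmx P by apply/matrixP => i j; rewrite !mxE.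
rewrite adjP in HE PPt.
have PtP : adjmx P *m P = 1%:M by apply: mulmx1C.
set N := M *m adjmx P.
have NN : adjmx N *m N = diag_mx e.
  rewrite /N adjmx_mul adjmxK -!mulmxA [adjmx M *m (M *m _)]mulmxA -/H HE.
  by rewrite !mulmxA PPt mul1mx -!mulmxA PPt mulmx1.
have orth : conjc (N O0 O0) * N O0 O1 + conjc (N O1 O0) * N O1 O1 = 0.
  have /matrixP/(_ O0 O1) := NN; rewrite mulmx2E !mxE inord_eq2 //= mulr0n.
suff [A HA] : exists A, [/\ unitary2 A, P *m adjmx P = 1%:M,
      (A *m N) O0 O1 = 0 & (A *m N) O1 O0 = 0] by exists A, P.
move: orth; set c00 := N O0 O0; set c01 := N O0 O1; set c10 := N O1 O0; set c11 := N O1 O1 => orth.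
have [t0|t0] := eqVneq (nr c00 ^+ 2 + nr c10 ^+ 2) 0.
  have [z00 z10] := sq0 (nr_ge0 c00) (nr_ge0 c10) t0.
  have e00 := nr_eq0 z00; have e10 := nr_eq0 z10.
  have [t1|t1] := eqVneq (nr c01 ^+ 2 + nr c11 ^+ 2) 0.
    have [z01 z11] := sq0 (nr_ge0 c01) (nr_ge0 c11) t1.
    have e01 := nr_eq0 z01; have e11 := nr_eq0 z11.
    exists (mat2 1 0 0 1); split => //.
    - by apply: unitary_mat2; rewrite !conjcE; ring.
    - by rewrite mulmx2E -/c01 -/c11 e01 e11; ring.
    - by rewrite mulmx2E -/c00 -/c10 e00 e10; ring.
  set s := Num.sqrt (nr c01 ^+ 2 + nr c11 ^+ 2).
  have hs : s != 0 by apply: sqrt_pos => //; apply: addr_ge0; apply: sqr_ge0.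
  have hC := RC_neq0 hs.
  exists (mat2 (conjc (conjc c11) / s%:C) (conjc (- conjc c01) / s%:C)
               (- (- conjc c01) / s%:C) (conjc c11 / s%:C)); split => //.
  - apply: unit_perp => //; rewrite nr2E !conjcE; ring.
  - by rewrite mulmx2E !mat2E -/c01 -/c11 !conjcE; field.
  - by rewrite mulmx2E !mat2E -/c00 -/c10 e00 e10; field.
set s := Num.sqrt (nr c00 ^+ 2 + nr c10 ^+ 2).
have hs : s != 0 by apply: sqrt_pos => //; apply: addr_ge0; apply: sqr_ge0.
have hC := RC_neq0 hs.
exists (mat2 (conjc c00 / s%:C) (conjc c10 / s%:C) (- c10 / s%:C) (c00 / s%:C)); split => //.
- by apply: unit_perp => //; rewrite nr2E.
- rewrite mulmx2E !mat2E -/c01 -/c11.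
  transitivity ((conjc c00 * c01 + conjc c10 * c11) / s%:C); first by field.
  by rewrite orth mul0r.
- by rewrite mulmx2E !mat2E -/c00 -/c10; field.
Qed.

End SVD2.

Section Schmidt.
Variable R : realType.
Local Notation C := R[i].
Local Notation O0 := (inord 0 : 'I_2).
Local Notation O1 := (inord 1 : 'I_2).

Definition mat_of (w : 'cV[C]_4) : 'M[C]_2 := \matrix_(a < 2, b < 2) w (inord (2 * a + b)) 0.
Definition cmx (Q : 'M[C]_2) : 'M[C]_2 := \matrix_(i < 2, j < 2) conjc (Q i j).

Lemma kronvec (UA Q : 'M[C]_2) (w : 'cV[C]_4) k :
  (kron2 UA (cmx Q) *m w) k 0 = (UA *m mat_of w *m adjmx Q) (hi k) (lo k).
Proof.
rewrite !mxE sum4 sum2 !mxE !sum2 !mxE !hilo !inordK //=.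
ring.
Qed.

Lemma unitary_cmx (Q : 'M[C]_2) : Q *m adjmx Q = 1%:M -> unitary2 (cmx Q).
Proof.
move=> hQ; apply/matrixP => i j.
have /matrixP/(_ i j) := hQ; rewrite !mxE => E.
rewrite -[RHS]conjcn -E conjc_sum; apply: eq_bigr => k _; rewrite !mxE !conjcE //.
Qed.

Lemma adj_unitary (U : 'M[C]_4) : U *m adjmx U = 1%:M -> adjmx U *m U = 1%:M.
Proof. exact: mulmx1C. Qed.

Lemma norm_pres (U : 'M[C]_4) (w : 'cV[C]_4) : U *m adjmx U = 1%:M ->
  adjmx (U *m w) *m (U *m w) = adjmx w *m w.
Proof.
move=> hU; rewrite adjmx_mul -mulmxA [adjmx U *m _]mulmxA adj_unitary // mul1mx //.
Qed.

Lemma ketE a b (k : nat) : (k < 4)%N -> (ket R a b) (inord k) 0 = ((k == 2 * a + b)%N)%:R.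
Proof. by move=> hk; rewrite mxE inordK. Qed.

Definition kb := ((erefl : (0 == 2 * 0 + 0)%N = true), (erefl : (0 == 2 * 1 + 1)%N = false),
  (erefl : (1 == 2 * 0 + 0)%N = false), (erefl : (1 == 2 * 1 + 1)%N = false),
  (erefl : (2 == 2 * 0 + 0)%N = false), (erefl : (2 == 2 * 1 + 1)%N = false),
  (erefl : (3 == 2 * 0 + 0)%N = false), (erefl : (3 == 2 * 1 + 1)%N = true)).

Definition kb2 := ((erefl : true%:R = 1 :> C), (erefl : false%:R = 0 :> C)).

Lemma addZE (a b : C) (u v : 'cV[C]_4) k : (a *: u + b *: v) k 0 = a * u k 0 + b * v k 0.
Proof. by rewrite !mxE. Qed.

Lemma schmidt_dec (w : 'cV[C]_4) : adjmx w *m w = 1%:M ->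
  exists UA UB : 'M[C]_2, [/\ unitary2 UA, unitary2 UB &
  exists x y : R, [/\ 0 <= x, 0 <= y, x ^+ 2 + y ^+ 2 = 1 &
    kron2 UA UB *m w = x%:C *: ket R 0 0 + y%:C *: ket R 1 1]].
Proof.
move=> hw.
have [A [Q [hA hQ h01 h10]]] := svd2 (mat_of w).
set D := A *m (mat_of w *m adjmx Q) in h01 h10.
set p := D O0 O0; set q := D O1 O1.
pose Dph := mat2 (conjc (ph p)) 0 0 (conjc (ph q)).
have hDph : unitary2 Dph.
  apply: unitary_mat2; rewrite !conjcE ?mulr0 ?addr0 ?add0r ?mul0r // mulrC phP //.
exists (Dph *m A), (cmx Q).
have hU1 : unitary2 (Dph *m A) by apply: unitary2_mul.
have hU2 : unitary2 (cmx Q) by apply: unitary_cmx.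
split => //.
have vE k : (kron2 (Dph *m A) (cmx Q) *m w) k 0 = (Dph *m D) (hi k) (lo k).
  by rewrite kronvec /D !mulmxA.
have eqv : kron2 (Dph *m A) (cmx Q) *m w = (nr p)%:C *: ket R 0 0 + (nr q)%:C *: ket R 1 1.
  apply/matrixP => k j; rewrite (ord1 j) vE.
  rewrite addZE.
  case: (ord4P k) => ->; rewrite !hilo mulmx2E /Dph !mat2E -/p -/q ?h01 ?h10 !ketE //=;
    rewrite ?mulr0 ?mulr1 ?mul0r ?addr0 ?add0r //.
  - by rewrite mulrC phN.
  - by rewrite mulrC phN.
exists (nr p), (nr q); split => //; try exact: nr_ge0.
have := norm_pres w (unitary_kron2 hU1 hU2); rewrite hw eqv => /matrixP/(_ 0 0).
rewrite !mxE sum4 !mxE !inordK // !kb eqxx => E.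
apply: (@complexI R); rewrite RCD !RCX.
rewrite (_ : 1%:C = true%:R) // -E !conjcE !kb2; ring.
Qed.

End Schmidt.

Section Trig.
Variable R : realType.

Lemma sqrt_sq (s : R) : 0 <= s -> Num.sqrt (s ^+ 2) = s.
Proof. by move=> hs; rewrite sqrtr_sqr ger0_norm. Qed.

Lemma acos_facts (a b : R) : a ^+ 2 + b ^+ 2 = 1 ->
  [/\ 0 <= acos a <= pi, cos (acos a) = a & sin (acos a) = `|b|].
Proof.
move=> h.
have ha : -1 <= a <= 1 by apply/andP; split; nra.
have [h1 h2] := acos_def ha.
split => //; rewrite sin_acos // (_ : 1 - a ^+ 2 = b ^+ 2); last by lra.
by rewrite sqrtr_sqr.
Qed.

Lemma angle1 (c s : R) : 0 <= c -> 0 <= s -> c ^+ 2 + s ^+ 2 = 1 ->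
  exists t, [/\ 0 <= t <= pi / 2, cos t = c & sin t = s].
Proof.
move=> hc hs h; have [/andP [t0 t1] ct st] := acos_facts h.
exists (acos c); split => //; last by rewrite st ger0_norm.
rewrite t0 /=; rewrite leNgt; apply/negP => hlt.
have : 0 < cos (acos c - pi).
  apply: cos_gt0_pihalf; apply/andP; split.
    have hp := pi_gt0 R. lra.
  have hp := pi_gt0 R. lra.
rewrite cosB cospi sinpi ct; lra.
Qed.

Lemma angle2 (a b : R) : a ^+ 2 + b ^+ 2 = 1 ->
  exists t, [/\ 0 <= t <= 2 * pi, cos t = a & sin t = b].
Proof.
move=> h; have [/andP [t0 t1] ct st] := acos_facts h.
have hp := pi_gt0 R.
have [hb|hb] := leP 0 b.
  exists (acos a); split => //; last by rewrite st ger0_norm.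
  apply/andP; split => //; lra.
exists (pi *+ 2 - acos a); split.
- apply/andP; split; rewrite mulr2n; lra.
- by rewrite cosB cos2pi sin2pi ct; ring.
- rewrite sinB cos2pi sin2pi st ltr0_norm //; ring.
Qed.

End Trig.

Section Final.
Variable R : realType.
Local Notation C := R[i].
Local Notation O0 := (inord 0 : 'I_2).
Local Notation O1 := (inord 1 : 'I_2).

Lemma unit_sqrt (u : C) : u * conjc u = 1 -> exists z, z ^+ 2 = u /\ z * conjc z = 1.
Proof.
move=> hu; exists (sqrtc u); split; first exact: sqr_sqrtc.
have h2 : (sqrtc u * conjc (sqrtc u)) ^+ 2 = 1.
  by rewrite exprMn -conjcX sqr_sqrtc.
rewrite nrE2 in h2 *.
have h3 : (nr (sqrtc u) ^+ 2) ^+ 2 = 1.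
  apply: (@complexI R); rewrite !RCX h2 //.
have h4 : nr (sqrtc u) = 1.
  move: h3 (nr_ge0 (sqrtc u)); set x := nr _ => h3 hx.
  move/eqP: h3; rewrite sqrf_eq1 => /orP [/eqP h|/eqP h]; last first.
    by have := sqr_ge0 x; rewrite h; lra.
  move/eqP: h; rewrite sqrf_eq1 => /orP [/eqP //|/eqP h]; lra.
by rewrite h4 expr1n.
Qed.

Lemma kron_diag (z : C) (u : 'cV[C]_4) k :
  (kron2 (mat2 z 0 0 (conjc z)) (mat2 (conjc z) 0 0 z) *m u) k 0 =
  (kron2 (mat2 z 0 0 (conjc z)) (mat2 (conjc z) 0 0 z)) k k * u k 0.
Proof.
rewrite !mxE sum4 !mxE.
case: (ord4P k) => ->; rewrite !hilo !inordK //= ; ring.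
Qed.

Local Notation ve v k := (v (@inord 3 k) 0).

Definition kbx := ((erefl : (0 == 2 * 0 + 1)%N = false), (erefl : (0 == 2 * 1 + 0)%N = false),
  (erefl : (1 == 2 * 0 + 1)%N = true), (erefl : (1 == 2 * 1 + 0)%N = false),
  (erefl : (2 == 2 * 0 + 1)%N = false), (erefl : (2 == 2 * 1 + 0)%N = true),
  (erefl : (3 == 2 * 0 + 1)%N = false), (erefl : (3 == 2 * 1 + 0)%N = false)).

Lemma kd (z : C) k : (k < 4)%N ->
  (kron2 (mat2 z 0 0 (conjc z)) (mat2 (conjc z) 0 0 z)) (inord k) (inord k) =
  [:: z * conjc z; z * z; conjc z * conjc z; conjc z * z]`_k.
Proof.
rewrite mxE; case: k => [|[|[|[|k]]]] // _; rewrite !hilo !mat2E //.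
Qed.

Lemma unit_diag (z : C) : z * conjc z = 1 -> unitary2 (mat2 z 0 0 (conjc z)) /\ unitary2 (mat2 (conjc z) 0 0 z).
Proof.
move=> hz; split; apply: unitary_mat2; rewrite !conjcE ?mulr0 ?addr0 ?add0r ?mul0r //.
by rewrite mulrC.
by rewrite mulrC.
Qed.

Lemma local_form (w1 w2 : 'cV[C]_4) :
  adjmx w1 *m w1 = 1%:M -> adjmx w2 *m w2 = 1%:M -> adjmx w1 *m w2 = 0 ->
  exists (UA UB : 'M[C]_2) (theta phi alpha beta : R) (c : C),
   [/\ unitary2 UA /\ unitary2 UB,
       [/\ 0 <= theta <= pi / 2, 0 <= phi <= pi / 2 & 0 <= alpha <= pi / 2],
       0 <= beta <= 2 * pi, c * conjc c = 1 &
       kron2 UA UB *m w1 = (cos theta)%:C *: ket R 0 0 + (sin theta)%:C *: ket R 1 1 /\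
       kron2 UA UB *m w2 = c *: ((cos phi)%:C *: ((cos alpha)%:C *: ket R 0 1 + (sin alpha)%:C *: ket R 1 0)
          + ((cos beta +i* sin beta) * (sin phi)%:C) *: ((sin theta)%:C *: ket R 0 0 - (cos theta)%:C *: ket R 1 1))].
Proof.
move=> n1 n2 o12.
have [UA0 [UB0 [hA0 hB0 [x [y [hx hy hxy E1]]]]]] := @schmidt_dec R w1 n1.
have U0u := unitary_kron2 hA0 hB0.
have [v hvE] : {v | kron2 UA0 UB0 *m w2 = v} by exists (kron2 UA0 UB0 *m w2).
have hv : adjmx v *m v = 1%:M by rewrite -hvE norm_pres.
have hov : adjmx (kron2 UA0 UB0 *m w1) *m v = 0.
  by rewrite -hvE adjmx_mul -mulmxA [adjmx (kron2 _ _) *m _]mulmxA adj_unitary // mul1mx.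
rewrite E1 in hov.
have orth : x%:C * ve v 0 + y%:C * ve v 3 = 0.
  have /matrixP/(_ 0 0) := hov; rewrite !mxE sum4 !mxE !inordK // !kb !kb2 !conjcE => E.
  by rewrite -[RHS]E; ring.
have nrm : ve v 0 * conjc (ve v 0) + ve v 1 * conjc (ve v 1) + ve v 2 * conjc (ve v 2)
           + ve v 3 * conjc (ve v 3) = 1.
  have /matrixP/(_ 0 0) := hv; rewrite !mxE sum4 !mxE => E.
  by rewrite -[RHS]E; ring.
pose pq := ph (ve v 1); pose pr := ph (ve v 2).
have [g [hg2 hg]] : exists g, g ^+ 2 = conjc (pq * pr) /\ g * conjc g = 1.
  apply: unit_sqrt; rewrite conjcKK !conjcE.
  transitivity ((pq * conjc pq) * (pr * conjc pr)); first ring.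
  by rewrite !phP mulr1.
have [z [hz2 hz]] : exists z, z ^+ 2 = conjc pq * conjc g /\ z * conjc z = 1.
  apply: unit_sqrt; rewrite !conjcE.
  transitivity ((pq * conjc pq) * (g * conjc g)); first ring.
  by rewrite phP hg mulr1.
have [hDA hDB] := unit_diag hz.
have h1 : x%:C ^+ 2 + y%:C ^+ 2 = 1 :> C by rewrite -!RCX -RCD hxy.
have kpq : pq * g = conjc g * conjc pr.
  transitivity (pq * g ^+ 2 * conjc g); first by rewrite -[LHS]mulr1 -hg; ring.
  rewrite hg2 !conjcE.
  transitivity ((pq * conjc pq) * conjc pr * conjc g); first ring.
  by rewrite phP; ring.
pose T := g * (y%:C * ve v 0 - x%:C * ve v 3).
have [th [hth cth sth]] := angle1 hx hy hxy.
pose cphi := Num.sqrt (nr (ve v 1) ^+ 2 + nr (ve v 2) ^+ 2).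
have hcphi : 0 <= cphi by apply: sqrtr_ge0.
have nq : cphi ^+ 2 + nr T ^+ 2 = 1.
  apply: (@complexI R); rewrite RCD !RCX nr2E -nrE2 /T !conjcE.
  transitivity ((g * conjc g) * (((x%:C)^+2 + (y%:C)^+2) * (ve v 0 * conjc (ve v 0) + ve v 3 * conjc (ve v 3))
     - (x%:C * ve v 0 + y%:C * ve v 3) * (x%:C * conjc (ve v 0) + y%:C * conjc (ve v 3)))
     + ve v 1 * conjc (ve v 1) + ve v 2 * conjc (ve v 2)); first ring.
  rewrite hg orth mul0r subr0 mul1r -!RCX -RCD hxy (_ : 1%:C = 1) // mul1r -[RHS]nrm; ring.
have [ph_ [hph cph sph]] := angle1 hcphi (nr_ge0 T) nq.
have [al [hal cal sal]] : exists al, [/\ 0 <= al <= pi / 2, cphi * cos al = nr (ve v 1)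
                                        & cphi * sin al = nr (ve v 2)].
  have [c0|c0] := eqVneq cphi 0.
    have hle : nr (ve v 1) ^+ 2 + nr (ve v 2) ^+ 2 <= 0 by rewrite -sqrtr_eq0 -/cphi c0.
    have h0 : nr (ve v 1) ^+ 2 + nr (ve v 2) ^+ 2 = 0.
      by apply/eqP; rewrite eq_le hle addr_ge0 // sqr_ge0.
    have [-> ->] := sq0 (nr_ge0 _) (nr_ge0 _) h0.
    exists 0; rewrite c0 !mul0r; split => //; have := pi_gt0 R; lra.
  have hc2 : cphi ^+ 2 = nr (ve v 1) ^+ 2 + nr (ve v 2) ^+ 2.
    by rewrite /cphi sqr_sqrtr // addr_ge0 // sqr_ge0.
  have [al [hal ca sa]] := @angle1 R (nr (ve v 1) / cphi) (nr (ve v 2) / cphi)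
     (divr_ge0 (nr_ge0 _) hcphi) (divr_ge0 (nr_ge0 _) hcphi)
     (ltac:(rewrite !expr_div_n -mulrDl -hc2 divff // expf_neq0 //)).
  by exists al; split => //; [rewrite ca | rewrite sa]; field.
have phu : ph T * conjc (ph T) = 1 by apply: phP.
have [be [hbe cbe sbe]] : exists be, [/\ 0 <= be <= 2 * pi, cos be = complex.Re (ph T)
                                      & sin be = complex.Im (ph T)].
  apply: angle2; move: phu; case: (ph T) => a b /=; simpc => [[]] h _; rewrite -h; ring.
have eb : (cos be +i* sin be) = ph T by rewrite cbe sbe; case: (ph T).
have phT : ph T * (nr T)%:C = T.
  by rewrite -phN mulrA [ph T * T]mulrC -mulrA phP mulr1.
pose UA := mat2 z 0 0 (conjc z) *m UA0. pose UB := mat2 (conjc z) 0 0 z *m UB0.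
exists UA, UB, th, ph_, al, be, (conjc g).
split => //.
- by split; apply: unitary2_mul.
- by rewrite conjcKK mulrC.
rewrite -kron2_mul -!mulmxA hvE E1.
rewrite cth sth cph sph eb.
split; apply/matrixP => k j; rewrite (ord1 j) kron_diag; case: (ord4P k) => -> ; rewrite !kd //=.
all: rewrite !mxE !inordK // ?kb ?kbx ?kb2.
- by transitivity ((z * conjc z) * x%:C); [ring | rewrite hz; ring].
- by ring.
- by ring.
- by transitivity ((z * conjc z) * y%:C); [ring | rewrite hz; ring].
- transitivity ((z * conjc z) * ve v 0); first ring.
  rewrite hz phT /T.
  transitivity (conjc g * (g * (y%:C * ve v 0 - x%:C * ve v 3) * y%:C)); last ring.
  rewrite mul1r; apply/eqP; rewrite -subr_eq0; apply/eqP.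
  transitivity (ve v 0 * (1 - (x%:C ^+ 2 + y%:C ^+ 2)) + x%:C * (x%:C * ve v 0 + y%:C * ve v 3)
     + (1 - g * conjc g) * (y%:C ^+ 2 * ve v 0 - x%:C * y%:C * ve v 3)); first ring.
  by rewrite h1 orth hg; ring.
- transitivity (conjc g * (cphi * cos al)%:C); last by rewrite RCM; ring.
  transitivity (z ^+ 2 * ve v 1); first ring.
  by rewrite cal -phN hz2; ring.
- transitivity (conjc g * (cphi * sin al)%:C); last by rewrite RCM; ring.
  transitivity (conjc (z ^+ 2) * ve v 2); first by rewrite conjcX; ring.
  rewrite sal -phN hz2 !conjcE.
  transitivity ((pq * g) * ve v 2); first ring.
  rewrite kpq; ring.
- transitivity ((z * conjc z) * ve v 3); first ring.
  rewrite hz phT /T.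
  transitivity (conjc g * (g * (y%:C * ve v 0 - x%:C * ve v 3) * - x%:C)); last ring.
  rewrite mul1r; apply/eqP; rewrite -subr_eq0; apply/eqP.
  transitivity (ve v 3 * (1 - (x%:C ^+ 2 + y%:C ^+ 2)) + y%:C * (x%:C * ve v 0 + y%:C * ve v 3)
     + (1 - g * conjc g) * (x%:C ^+ 2 * ve v 3 - x%:C * y%:C * ve v 0)); first ring.
  by rewrite h1 orth hg; ring.
Qed.

End Final.

Theorem mainTheorem1 (R : realType) (sigma : 'M[R[i]]_4) :
  density4 sigma -> (\rank sigma <= 2)%N ->
  exists (UA UB : 'M[R[i]]_2) (theta phi alpha beta nu1 nu2 : R),
    [/\ unitary2 UA /\ unitary2 UB,
        [/\ 0 <= theta <= pi / 2, 0 <= phi <= pi / 2 & 0 <= alpha <= pi / 2],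
        0 <= beta <= 2 * pi,
        [/\ 0 <= nu1 <= 1, 0 <= nu2 <= 1 & nu1 + nu2 = 1] &
        let psi1 : 'cV[R[i]]_4 :=
          (cos theta)%:C *: ket R 0 0 + (sin theta)%:C *: ket R 1 1 in
        let psi2 : 'cV[R[i]]_4 :=
          (cos phi)%:C *: ((cos alpha)%:C *: ket R 0 1 + (sin alpha)%:C *: ket R 1 0)
          + ((cos beta +i* sin beta) * (sin phi)%:C)
              *: ((sin theta)%:C *: ket R 0 0 - (cos theta)%:C *: ket R 1 1) in
        kron2 UA UB *m sigma *m adjmx (kron2 UA UB)
          = nu1%:C *: proj psi1 + nu2%:C *: proj psi2].
Proof.
move=> hd rk.
have [w1 [w2 [n1 [n2 [h1 h2 h12 [hn1 hn2 hn] hs]]]]] := spec_decomp hd rk.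
have [UA [UB [th [ph_ [al [be [c [[hUA hUB] hang hbe hc [E1 E2]]]]]]]]] := local_form h1 h2 h12.
exists UA, UB, th, ph_, al, be, n1, n2; split => //.
- split => //; apply/andP; split => //; lra.
move=> psi1 psi2.
rewrite hs mulmxDr mulmxDl -!scalemxAr -!scalemxAl !proj_conj E1 E2 projZ hc scale1r.
by [].
Qed.
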